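(* Consider three agents $a,b,c$, each starting with an input value in $\{0,1\}$ (all $8$ input assignments are possible), communicating for exactly one round in the full-information test-and-set model described in the context. There is no decision protocol solving the (0-)majority consensus task in one round: there is no family of functions $\delta_i$ ($i\in\{a,b,c\}$), mapping the possible local states of agent $i$ after one round to $\{0,1\}$, such that for every input assignment and every communication graph of the test-and-set model, the output triple $(\delta_a(\ell_a),\delta_b(\ell_b),\delta_c(\ell_c))$ satisfies both majority agreement and validity.
   Context: Agents: $\mathrm{Ag}=\{a,b,c\}$. A communication graph is a reflexive relation $G \subseteq \mathrm{Ag}\times\mathrm{Ag}$; write $j \to i$ for $(j,i)\in G$. Full-information round: initially the local state of agent $i$ is its input value $x_i$; after a round with graph $G$, the local state of agent $i$ is the tuple $(m_a,m_b,m_c)$ where $m_j=x_j$ if $j\to i$ in $G$ and $m_j=\bot$ otherwise. The graph is chosen arbitrarily from the model's set of graphs. The test-and-set model consists of $9$ graphs: choose a winner $w\in\mathrm{Ag}$, and let $u,v$ be the two other agents (losers); besides reflexive loops, the graph contains $w\to u$ and $w\to v$ (the winner receives from no one), and among the losers either only $u\to v$, or only $v\to u$, or both $u\to v$ and $v\to u$. Majority consensus task: each agent outputs a value in $\{0,1\}$ computed only from its local state; (majority agreement) either all three outputs are equal, or at least two of the outputs are $0$; (validity) every output value is one of the input values of the execution (in particular, if all inputs equal $v$ then all outputs equal $v$). *)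

(* Defs.v *)
From Stdlib Require Import Bool.

Inductive Ag := a | b | c.

Definition Ag_eqb (x y : Ag) : bool :=
  match x, y with a, a | b, b | c, c => true | _, _ => false end.

(* A communication graph: [G j i = true] means j -> i (i receives from j). *)
Definition graph := Ag -> Ag -> bool.

Definition reflexive_graph (G : graph) : Prop := forall i, G i i = true.

Inductive loser_conf := UtoV | VtoU | Both.

Definition tas_graph (w u v : Ag) (k : loser_conf) : graph :=
  fun j i =>
    Ag_eqb j i
    || (Ag_eqb j w && (Ag_eqb i u || Ag_eqb i v))
    || match k with
       | UtoV => Ag_eqb j u && Ag_eqb i v
       | VtoU => Ag_eqb j v && Ag_eqb i u
       | Both => (Ag_eqb j u && Ag_eqb i v) || (Ag_eqb j v && Ag_eqb i u)
       end.

Definition tas_model (G : graph) : Prop :=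
  exists (w u v : Ag) (k : loser_conf),
    w <> u /\ w <> v /\ u <> v /\ G = tas_graph w u v k.

(* Input assignment x : Ag -> {0,1} (booleans: false = 0, true = 1). *)
Definition input := Ag -> bool.

Definition local_state := (option bool * option bool * option bool)%type.

Definition view (G : graph) (x : input) (i : Ag) : local_state :=
  let m j := if G j i then Some (x j) else None in
  (m a, m b, m c).

Definition majority_agreement (oa ob oc : bool) : Prop :=
  (oa = ob /\ ob = oc) \/
  (oa = false /\ ob = false) \/ (oa = false /\ oc = false) \/
  (ob = false /\ oc = false).

Definition valid_out (x : input) (o : bool) : Prop :=
  exists j, x j = o.

Definition solves_majority (delta : Ag -> local_state -> bool) : Prop :=
  forall (x : input) (G : graph), tas_model G ->
    let oa := delta a (view G x a) in
    let ob := delta b (view G x b) in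
    let oc := delta c (view G x c) in
    majority_agreement oa ob oc /\
    valid_out x oa /\ valid_out x ob /\ valid_out x oc.

(* Main.v *)
Require Import Defs.

Definition mk (p q r : bool) : input := fun j => match j with a => p | b => q | c => r end.

Lemma tm w u v k : w <> u -> w <> v -> u <> v -> tas_model (tas_graph w u v k).
Proof. intros; exists w, u, v, k; auto. Qed.

Lemma vo_f (o : bool) : valid_out (mk o o o) (negb o) -> False.
Proof. intros [j Hj]; destruct j, o; discriminate. Qed.

Lemma dab : a <> b. Proof. discriminate. Qed.
Lemma dac : a <> c. Proof. discriminate. Qed.
Lemma dbc : b <> c. Proof. discriminate. Qed.
Lemma dba : b <> a. Proof. discriminate. Qed.
Lemma dca : c <> a. Proof. discriminate. Qed.
Lemma dcb : c <> b. Proof. discriminate. Qed.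

Lemma vall (o y : bool) : valid_out (mk o o o) y -> y = o.
Proof. intros [j Hj]; destruct j; simpl in Hj; auto. Qed.

Lemma maj3 p q r : majority_agreement p q r -> p = true -> q = true -> r = true.
Proof. unfold majority_agreement; intros M -> ->; destruct r; intuition discriminate. Qed.
Lemma maj2 p q r : majority_agreement p q r -> p = true -> r = true -> q = true.
Proof. unfold majority_agreement; intros M -> ->; destruct q; intuition discriminate. Qed.
Lemma maj1 p q r : majority_agreement p q r -> q = true -> r = true -> p = true.
Proof. unfold majority_agreement; intros M -> ->; destruct p; intuition discriminate. Qed.
Lemma majF p q r : majority_agreement p q r -> p = true -> q = true -> r = false -> False.
Proof. unfold majority_agreement; intros M -> -> ->; intuition discriminate. Qed.

Theorem mainTheorem2 :
  ~ exists delta : Ag -> local_state -> bool, solves_majority delta.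
Proof.
  intros [d H].
  pose proof (H (mk false false false) _ (tm c a b Both dca dcb dab)) as H1.
  pose proof (H (mk true true false) _ (tm a b c Both dab dac dbc)) as H2.
  pose proof (H (mk true true false) _ (tm b a c UtoV dba dbc dac)) as H3.
  pose proof (H (mk true true false) _ (tm b a c Both dba dbc dac)) as H4.
  pose proof (H (mk true true false) _ (tm c a b Both dca dcb dab)) as H5.
  pose proof (H (mk true true true) _ (tm a b c Both dab dac dbc)) as H6.
  pose proof (H (mk true true true) _ (tm b a c UtoV dba dbc dac)) as H7.
  clear H.
  cbv [view tas_graph Ag_eqb orb andb] in H1, H2, H3, H4, H5, H6, H7.
  simpl in H1, H2, H3, H4, H5, H6, H7.
  destruct H1 as [M1 [_ [_ V1]]].
  destruct H2 as [M2 _]. destruct H3 as [M3 _]. destruct H4 as [M4 _].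
  destruct H5 as [M5 _].
  destruct H6 as [_ [V6a _]].
  destruct H7 as [_ [V7a [V7b _]]].
  apply vall in V1, V6a, V7a, V7b.
  pose proof (maj3 _ _ _ M3 V7a V7b) as C.
  pose proof (maj2 _ _ _ M2 V6a C) as B.
  pose proof (maj1 _ _ _ M4 V7b C) as A.
  exact (majF _ _ _ M5 A B V1).
Qed.
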